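(* Let $\alpha>0$ be non-integer, $n=\lfloor\alpha\rfloor+1$, and $a,b\in\mathbb{R}$ with $a<b$ and $b\equiv a\pmod 1$. If $f$ is defined on ${}_{b}\mathbb{N}$ and $g$ is defined on $\mathbb{N}_a$, then $$\sum_{s=a+1}^{b-1}f(s)\,(\Delta_{a+1}^{\alpha}g)(s-\alpha)=\sum_{s=a+1}^{b-1}g(s)\,({}_{b-1}\Delta^{\alpha}f)(s+\alpha).$$
   Context: Notation: $\mathbb{N}_a=\{a,a+1,\dots\}$, ${}_{b}\mathbb{N}=\{b,b-1,\dots\}$, $\sigma(t)=t+1$, $\Delta h(t)=h(t+1)-h(t)$, $\nabla h(t)=h(t)-h(t-1)$. Falling factorial $t^{(\beta)}=\Gamma(t+1)/\Gamma(t+1-\beta)$ (division at a pole gives $0$). Delta left fractional sum: $\Delta_c^{-\gamma}h(t)=\frac{1}{\Gamma(\gamma)}\sum_{s=c}^{t-\gamma}(t-\sigma(s))^{(\gamma-1)}h(s)$; delta left fractional difference: $\Delta_c^{\alpha}h(t)=\Delta^n\Delta_c^{-(n-\alpha)}h(t)$. Delta right fractional sum: ${}_{c}\Delta^{-\gamma}h(t)=\frac{1}{\Gamma(\gamma)}\sum_{s=t+\gamma}^{c}(s-\sigma(t))^{(\gamma-1)}h(s)$; delta right fractional difference: ${}_{c}\Delta^{\alpha}h(t)=(-1)^n\nabla^n\,{}_{c}\Delta^{-(n-\alpha)}h(t)$. Sums with upper limit smaller than lower limit are $0$ (in particular fractional sums evaluated at points beyond their starting/ending point are $0$). *)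

(* Defs.v *)
From Stdlib Require Import Reals Lra ZArith ClassicalEpsilon.
Open Scope R_scope.

Fixpoint sum_nat (n : nat) (F : nat -> R) : R :=
  match n with
  | O => 0
  | S m => sum_nat m F + F m
  end.

(** sumR c u F = sum over s = c, c+1, c+2, ... with s <= u of F s
    (empty, i.e. 0, when u < c).  The number of terms is floor(u-c)+1 = up(u-c). *)
Definition sumR (c u : R) (F : R -> R) : R :=
  sum_nat (Z.to_nat (up (u - c))) (fun k => F (c + INR k)).

(** Euler's Gamma function, via Gauss' limit formula
    Gamma x = lim_n n! n^x / (x (x+1) ... (x+n)). *)
Fixpoint poch_prod (x : R) (n : nat) : R :=
  match n with
  | O => x
  | S m => poch_prod x m * (x + INR (S m))
  end.

Definition gauss_seq (x : R) (n : nat) : R :=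
  INR (fact n) * Rpower (INR n) x / poch_prod x n.

Definition Gamma (x : R) : R :=
  epsilon (inhabits 0) (fun l => Un_cv (gauss_seq x) l).

Definition is_pole (x : R) : Prop := exists k : nat, x = - INR k.

Definition falling (t beta : R) : R :=
  match excluded_middle_informative (is_pole (t + 1 - beta)) with
  | left _ => 0
  | right _ => Gamma (t + 1) / Gamma (t + 1 - beta)
  end.

Fixpoint deltaN (n : nat) (h : R -> R) : R -> R :=
  match n with
  | O => h
  | S m => fun t => deltaN m h (t + 1) - deltaN m h t
  end.

Fixpoint nablaN (n : nat) (h : R -> R) : R -> R :=
  match n with
  | O => h
  | S m => fun t => nablaN m h t - nablaN m h (t - 1)
  end.

Definition frac_order (alpha : R) : nat := S (Z.to_nat (Int_part alpha)).

Definition frac_sum_left (c gamma : R) (h : R -> R) (t : R) : R :=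
  / Gamma gamma * sumR c (t - gamma) (fun s => falling (t - (s + 1)) (gamma - 1) * h s).

Definition frac_diff_left (c alpha : R) (h : R -> R) : R -> R :=
  let n := frac_order alpha in
  deltaN n (frac_sum_left c (INR n - alpha) h).

Definition frac_sum_right (c gamma : R) (h : R -> R) (t : R) : R :=
  / Gamma gamma * sumR (t + gamma) c (fun s => falling (s - (t + 1)) (gamma - 1) * h s).

Definition frac_diff_right (c alpha : R) (h : R -> R) : R -> R :=
  let n := frac_order alpha in
  fun t => (-1) ^ n * nablaN n (frac_sum_right c (INR n - alpha) h) t.

(* Main.v *)
Require Import Defs.
From Stdlib Require Import Reals ZArith.
From Stdlib Require Import Lra Lia.
Open Scope R_scope.
Local Notation sum_nat := Defs.sum_nat.

Lemma sum_nat_ext (n : nat) (F G : nat -> R) : (forall k, (k < n)%nat -> F k = G k) -> sum_nat n F = sum_nat n G.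
Proof. induction n; simpl; intros H; [reflexivity|]. rewrite IHn by (intros; apply H; lia). rewrite H by lia. reflexivity. Qed.

Lemma sum_nat_minus (n : nat) (F G : nat -> R) : sum_nat n (fun k => F k - G k) = sum_nat n F - sum_nat n G.
Proof. induction n; simpl; [ring|]. rewrite IHn; ring. Qed.

Lemma sum_nat_plus (n : nat) (F G : nat -> R) : sum_nat n (fun k => F k + G k) = sum_nat n F + sum_nat n G.
Proof. induction n; simpl; [ring|]. rewrite IHn; ring. Qed.

Lemma sum_nat_scal (n : nat) (c : R) (F : nat -> R) : sum_nat n (fun k => c * F k) = c * sum_nat n F.
Proof. induction n; simpl; [ring|]. rewrite IHn; ring. Qed.

Lemma sum_nat_zero (n : nat) (F : nat -> R) : (forall k, (k<n)%nat -> F k = 0) -> sum_nat n F = 0.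
Proof. intros H. rewrite (sum_nat_ext n F (fun _ => 0)) by auto. clear H; induction n; simpl; [ring|]. rewrite IHn; ring. Qed.

Lemma sum_nat_add (p q : nat) (G : nat -> R) : sum_nat (p + q) G = sum_nat p G + sum_nat q (fun j => G (p + j)%nat).
Proof. induction q; simpl. rewrite Nat.add_0_r; ring. rewrite Nat.add_succ_r; simpl. rewrite IHq; ring. Qed.

Lemma sum_nat_swap (n m : nat) (H : nat -> nat -> R) : sum_nat n (fun x => sum_nat m (fun i => H x i)) = sum_nat m (fun i => sum_nat n (fun x => H x i)).
Proof. induction n; simpl.
- symmetry; apply sum_nat_zero; auto.
- rewrite IHn, sum_nat_plus. reflexivity. Qed.

Lemma sum_nat_pad (n m : nat) (F : nat -> R) : (n <= m)%nat -> sum_nat n F = sum_nat m (fun i => if (i <? n)%nat then F i else 0).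
Proof. intros Hnm. replace m with (n + (m - n))%nat by lia. rewrite sum_nat_add.
rewrite (sum_nat_zero (m - n)). 2:{ intros j _. destruct (Nat.ltb_spec (n+j) n); [lia|reflexivity]. }
rewrite Rplus_0_r. apply sum_nat_ext. intros k Hk. destruct (Nat.ltb_spec k n); [reflexivity|lia]. Qed.

Lemma sum_nat_shift (p M : nat) (G : nat -> R) : sum_nat M (fun x => if (p <=? x)%nat then G x else 0) = sum_nat (M - p) (fun j => G (p + j)%nat).
Proof. destruct (Nat.leb_spec p M).
- replace M with (p + (M - p))%nat at 1 by lia. rewrite sum_nat_add.
  rewrite (sum_nat_zero p). 2:{ intros j Hj. destruct (Nat.leb_spec p j); [lia|reflexivity]. }
  rewrite Rplus_0_l. apply sum_nat_ext. intros k Hk. destruct (Nat.leb_spec p (p+k)); [reflexivity|lia].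
- replace (M - p)%nat with 0%nat by lia. simpl. apply sum_nat_zero. intros k Hk.
  destruct (Nat.leb_spec p k); [lia|reflexivity]. Qed.

Lemma swap_base (M c : nat) (u v kap : nat -> R) :
 sum_nat M (fun x => u x * sum_nat (S x - c) (fun i => kap (x - i)%nat * v i))
 = sum_nat M (fun y => v y * sum_nat (M - (y + c)) (fun i => kap (c + i)%nat * u (y + c + i)%nat)).
Proof.
set (H := fun x i => if (i + c <=? x)%nat then u x * kap (x - i)%nat * v i else 0).
transitivity (sum_nat M (fun x => sum_nat M (fun i => H x i))).
{ apply sum_nat_ext. intros x Hx. rewrite (sum_nat_pad (S x - c) M) by lia.
  rewrite <- sum_nat_scal. apply sum_nat_ext. intros i Hi. unfold H.
  destruct (Nat.ltb_spec i (S x - c)); destruct (Nat.leb_spec (i+c) x); try lia; ring. }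
rewrite sum_nat_swap. apply sum_nat_ext. intros y Hy.
transitivity (sum_nat M (fun x => if (y + c <=? x)%nat then u x * kap (x - y)%nat * v y else 0)).
{ apply sum_nat_ext. intros x _. unfold H. reflexivity. }
rewrite sum_nat_shift. rewrite <- sum_nat_scal. apply sum_nat_ext. intros j _.
replace (y + c + j - y)%nat with (c + j)%nat by lia. ring. Qed.

Lemma up_IZR z : up (IZR z) = (z + 1)%Z.
Proof. symmetry; apply up_tech; rewrite ?plus_IZR; simpl; lra. Qed.

Lemma sumR_nat c u F (z : Z) : u - c = IZR z -> sumR c u F = sum_nat (Z.to_nat (z+1)) (fun k => F (c + INR k)).
Proof. intros H. unfold sumR. rewrite H, up_IZR. reflexivity. Qed.

Lemma sumR_ext c c' u u' F G : c = c' -> u = u' -> (forall x, F x = G x) -> sumR c u F = sumR c' u' G.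
Proof. intros -> -> H. unfold sumR. apply sum_nat_ext. auto. Qed.

Lemma sumR_minus c u F G : sumR c u (fun x => F x - G x) = sumR c u F - sumR c u G.
Proof. unfold sumR. apply sum_nat_minus. Qed.

Lemma sumR_scal c u k F : sumR c u (fun x => k * F x) = k * sumR c u F.
Proof. unfold sumR. apply sum_nat_scal. Qed.

Lemma deltaN_ext m h h' t : (forall t, h t = h' t) -> deltaN m h t = deltaN m h' t.
Proof. intros H; revert t; induction m; intros t; simpl; auto. rewrite !IHm; reflexivity. Qed.

Lemma nablaN_ext m h h' t : (forall t, h t = h' t) -> nablaN m h t = nablaN m h' t.
Proof. intros H; revert t; induction m; intros t; simpl; auto. rewrite !IHm; reflexivity. Qed.

Lemma deltaN_shift m h t : deltaN m h (t+1) = deltaN m (fun u => h (u+1)) t.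
Proof. revert t; induction m; intros t; simpl; auto. rewrite !IHm; reflexivity. Qed.

Lemma nablaN_shift m h t : nablaN m h (t-1) = nablaN m (fun u => h (u-1)) t.
Proof. revert t; induction m; intros t; simpl; auto. rewrite !IHm; reflexivity. Qed.

Definition Pl (a alpha : R) (g : R -> R) (c : nat) (K : R -> R) (t : R) :=
  sumR (a+1) (t - (INR c - alpha)) (fun r => K (t - r) * g r).
Definition Qr (b alpha : R) (f : R -> R) (c : nat) (K : R -> R) (t : R) :=
  sumR (t + (INR c - alpha)) (b-1) (fun s => K (s - t) * f s).

Lemma Pl_shift a alpha g c K u : Pl a alpha g (S c) K (u+1) = Pl a alpha g c (fun e => K (e+1)) u.
Proof. unfold Pl. apply sumR_ext; [reflexivity| rewrite S_INR; ring |].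
intros r. f_equal. f_equal. ring. Qed.

Lemma Qr_shift b alpha f c K u : Qr b alpha f (S c) K (u-1) = Qr b alpha f c (fun e => K (e+1)) u.
Proof. unfold Qr. apply sumR_ext; [rewrite S_INR; ring | reflexivity |].
intros r. f_equal. f_equal. ring. Qed.

Lemma base a b alpha f g (k : Z) c K : b - a = IZR k ->
 sumR (a+1) (b-1) (fun s => f s * Pl a alpha g c K (s - alpha))
 = sumR (a+1) (b-1) (fun r => g r * Qr b alpha f c K (r + alpha)).
Proof.
intros Hk.
assert (E : b - 1 - (a + 1) = IZR (k - 2)) by (rewrite minus_IZR; lra).
rewrite !(sumR_nat (a+1) (b-1) _ (k-2)) by exact E.
set (M := Z.to_nat (k - 2 + 1)).
set (u := fun x : nat => f (a + 1 + INR x)).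
set (v := fun x : nat => g (a + 1 + INR x)).
set (kap := fun d : nat => K (INR d - alpha)).
transitivity (sum_nat M (fun x => u x * sum_nat (S x - c) (fun i => kap (x - i)%nat * v i))).
{ apply sum_nat_ext. intros x Hx. unfold u. f_equal. unfold Pl.
  rewrite (sumR_nat _ _ _ (Z.of_nat x - Z.of_nat c)).
  2:{ rewrite minus_IZR, <- !INR_IZR_INZ. ring. }
  replace (Z.to_nat (Z.of_nat x - Z.of_nat c + 1)) with (S x - c)%nat by lia.
  apply sum_nat_ext. intros i Hi. unfold kap, v. f_equal. f_equal.
  rewrite minus_INR by lia. ring. }
rewrite swap_base. apply sum_nat_ext. intros y Hy. unfold v. f_equal. unfold Qr.
rewrite (sumR_nat _ _ _ (k - 2 - Z.of_nat y - Z.of_nat c)).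
2:{ rewrite !minus_IZR, <- !INR_IZR_INZ. rewrite minus_IZR in E. lra. }
replace (Z.to_nat (k - 2 - Z.of_nat y - Z.of_nat c + 1)) with (M - (y + c))%nat by (unfold M; lia).
apply sum_nat_ext. intros i Hi. unfold kap, u. f_equal.
- f_equal. rewrite plus_INR. ring.
- f_equal. rewrite !plus_INR. ring.
Qed.

Lemma main_ind a b alpha f g (k : Z) : b - a = IZR k -> forall m c K, (m <= c)%nat ->
 sumR (a+1) (b-1) (fun s => f s * deltaN m (Pl a alpha g c K) (s - alpha))
 = (-1)^m * sumR (a+1) (b-1) (fun r => g r * nablaN m (Qr b alpha f c K) (r + alpha)).
Proof.
intros Hk m. induction m; intros c K Hc.
- cbn [deltaN nablaN pow]. rewrite Rmult_1_l. apply (base a b alpha f g k); auto.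
- destruct c as [|c']; [lia|].
  rewrite (sumR_ext (a+1) (a+1) (b-1) (b-1) _ (fun s => f s * deltaN m (Pl a alpha g c' (fun e => K (e+1))) (s - alpha)
                                 - f s * deltaN m (Pl a alpha g (S c') K) (s - alpha))); auto.
  2:{ intros s. cbn [deltaN]. rewrite deltaN_shift. rewrite (deltaN_ext m (fun u => Pl a alpha g (S c') K (u + 1)) (Pl a alpha g c' (fun e => K (e+1)))).
      ring. intros t; apply Pl_shift. }
  rewrite (sumR_ext (a+1) (a+1) (b-1) (b-1) (fun r => g r * nablaN (S m) (Qr b alpha f (S c') K) (r + alpha))
                           (fun r => g r * nablaN m (Qr b alpha f (S c') K) (r + alpha)
                                 - g r * nablaN m (Qr b alpha f c' (fun e => K (e+1))) (r + alpha))); auto.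
  2:{ intros s. cbn [nablaN]. rewrite nablaN_shift. rewrite (nablaN_ext m (fun u => Qr b alpha f (S c') K (u - 1)) (Qr b alpha f c' (fun e => K (e+1)))).
      ring. intros t; apply Qr_shift. }
  rewrite !sumR_minus. rewrite IHm by lia. rewrite IHm by lia. cbn [pow]. ring.
Qed.

Theorem proposition4p7 (alpha a b : R) (f g : R -> R) :
  0 < alpha ->
  (forall k : Z, alpha <> IZR k) ->
  a < b ->
  (exists k : Z, b - a = IZR k) ->
  sumR (a + 1) (b - 1) (fun s => f s * frac_diff_left (a + 1) alpha g (s - alpha))
  = sumR (a + 1) (b - 1) (fun s => g s * frac_diff_right (b - 1) alpha f (s + alpha)).
Proof.
intros _ _ _ [k Hk].
set (K0 := fun e => / Gamma (INR (frac_order alpha) - alpha) * falling (e - 1) (INR (frac_order alpha) - alpha - 1)).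
rewrite (sumR_ext (a+1) (a+1) (b-1) (b-1) _ (fun s => f s * deltaN (frac_order alpha) (Pl a alpha g (frac_order alpha) K0) (s - alpha))); auto.
2:{ intros s. f_equal. cbv beta zeta delta [frac_diff_left]. apply deltaN_ext. intros t.
    unfold frac_sum_left, Pl. rewrite <- sumR_scal. apply sumR_ext; auto. intros r. unfold K0.
    replace (t - r - 1) with (t - (r + 1)) by ring. ring. }
rewrite (main_ind a b alpha f g k Hk) by lia.
rewrite <- sumR_scal. apply sumR_ext; auto. intros r.
cbv beta zeta delta [frac_diff_right].
rewrite (nablaN_ext _ (frac_sum_right (b - 1) (INR (frac_order alpha) - alpha) f) (Qr b alpha f (frac_order alpha) K0)). ring.
intros t. unfold frac_sum_right, Qr. rewrite <- sumR_scal. apply sumR_ext; auto. intros s. unfold K0.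
replace (s - t - 1) with (s - (t + 1)) by ring. ring.
Qed.
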